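(* Let $\Gamma\neq\mathbb N$ be the semigroup associated to an irreducible plane curve singularity, minimally generated by $r_0<\cdots<r_h$, with conductor $c$. Then $c\ge \frac53 2^{2h}-3\cdot 2^h+\frac43$.
   Context: A numerical semigroup is a submonoid of $(\mathbb N,+)$ with finite complement in $\mathbb N$; it has a unique minimal generating system. The conductor is $c=\mathrm F(\Gamma)+1$, where $\mathrm F(\Gamma)$ is the largest integer not in $\Gamma$. $\langle X\rangle$ is the submonoid generated by $X$. For an arrangement $(r_0,\ldots,r_h)$ of the minimal generators, set $d_k=\gcd(r_0,\ldots,r_{k-1})$ and $e_k=d_k/d_{k+1}$. A set $A$ of positive integers with nontrivial partition $A=A_1\cup A_2$ is the gluing of $A_1$ and $A_2$ if $\mathrm{lcm}(\gcd A_1,\gcd A_2)\in\langle A_1\rangle\cap\langle A_2\rangle$. $\Gamma$ is free for $(r_0,\ldots,r_h)$ if $h=0$, or $h\ge1$, $\{r_0,\ldots,r_h\}$ is the gluing of $\{r_0,\ldots,r_{h-1}\}$ and $\{r_h\}$, and $\langle r_0/d_h,\ldots,r_{h-1}/d_h\rangle$ is free for $(r_0/d_h,\ldots,r_{h-1}/d_h)$. $\Gamma$ is telescopic if it is free for the increasing arrangement $r_0<\cdots<r_h$. $\Gamma$ is the semigroup associated to an irreducible plane curve singularity if it is telescopic and $e_kr_k<r_{k+1}$ for all $k=1,\ldots,h-1$. *)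

(* Defs.v *)
From mathcomp Require Import all_boot all_order all_algebra.
Set Implicit Arguments. Unset Strict Implicit. Unset Printing Implicit Defensive.

Inductive gen (X : seq nat) : nat -> Prop :=
| gen0 : gen X 0
| genS x n : x \in X -> gen X n -> gen X (x + n).

Definition finite_complement (X : seq nat) : Prop :=
  exists N, forall n, N <= n -> gen X n.

(* X is a minimal generating system of <X>: no element of X lies in the
   submonoid generated by the remaining ones (in particular 0 \notin X). *)
Definition minimal_gens (X : seq nat) : Prop :=
  uniq X /\ forall x, x \in X -> ~ gen (rem x X) x.

Definition frobenius (X : seq nat) (F : nat) : Prop :=
  ~ gen X F /\ forall n, F < n -> gen X n.

(* gcd of a list (gcd of the empty list is 0). *)
Definition gcdl (X : seq nat) : nat := foldr gcdn 0 X.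

(* d_k = gcd(r_0,...,r_{k-1}),  e_k = d_k / d_{k+1}. *)
Definition dk (r : seq nat) (k : nat) : nat := gcdl (take k r).
Definition ek (r : seq nat) (k : nat) : nat := dk r k %/ dk r k.+1.

Definition gluing (A1 A2 : seq nat) : Prop :=
  A1 != [::] /\ A2 != [::] /\
  gen A1 (lcmn (gcdl A1) (gcdl A2)) /\ gen A2 (lcmn (gcdl A1) (gcdl A2)).

(* free for the arrangement r = (r_0,...,r_h); fuel n >= size r. *)
Fixpoint free_fuel (n : nat) (r : seq nat) : Prop :=
  match n with
  | 0 => True
  | n'.+1 =>
      if size r <= 1 then True
      else
        let h := (size r).-1 in
        gluing (take h r) [:: nth 0 r h] /\
        free_fuel n' (map (fun x => x %/ dk r h) (take h r))
  end.

Definition free_for (r : seq nat) : Prop := free_fuel (size r) r.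

Definition telescopic (r : seq nat) : Prop := sorted ltn r /\ free_for r.

Definition plane_curve_semigroup (r : seq nat) : Prop :=
  telescopic r /\
  forall k, 1 <= k -> k <= (size r).-1 - 1 ->
    ek r k * nth 0 r k < nth 0 r k.+1.

(* Main.v *)
Require Import Defs.
From mathcomp Require Import all_boot all_order all_algebra.
From mathcomp Require Import zify ring lra.

Lemma gen_sub X Y n : {subset X <= Y} -> gen X n -> gen Y n.
Proof. move=> sXY; elim=> [|x m Hx _ IH]; [exact: gen0| exact: genS (sXY _ Hx) IH]. Qed.

Lemma gen_add X a b : gen X a -> gen X b -> gen X (a + b).
Proof. move=> Ha Hb; elim: Ha => [|x m Hx _ IH] //; rewrite -addnA; exact: genS. Qed.

Lemma gen_mul X a k : gen X a -> gen X (a * k).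
Proof. move=> Ha; elim: k => [|k IH]; first by rewrite muln0; exact: gen0.
rewrite mulnS; exact: gen_add. Qed.

Lemma gen_scale_up X d n : gen X n -> gen (map (fun x => x * d) X) (n * d).
Proof. elim=> [|x m Hx _ IH]; first exact: gen0.
rewrite mulnDl; apply: genS IH; exact: map_f. Qed.

Lemma gen_scale_down s d n : gen (map (fun x => x * d) s) n -> exists2 x, n = x * d & gen s x.
Proof. elim=> [|x m Hx _ [y -> Hy]]; first by exists 0 => //; exact: gen0.
case/mapP: Hx => z Hz ->; exists (z + y); first by rewrite mulnDl.
exact: genS. Qed.

Lemma gen_cat1 X T n : gen (X ++ [:: T]) n -> exists a y, gen X a /\ n = a + T * y.
Proof. elim=> [|x m Hx _ [a [y [Ha ->]]]]; first by exists 0, 0; split; [exact: gen0 | rewrite muln0].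
move: Hx; rewrite mem_cat mem_seq1 => /orP [Hx|/eqP ->].
  by exists (x + a), y; split; [exact: genS | rewrite addnA].
by exists a, y.+1; split => //; rewrite mulnS; lia. Qed.

Lemma gcdl_dvd X x : x \in X -> gcdl X %| x.
Proof. elim: X => [|y X IH] //=; rewrite in_cons => /orP [/eqP ->|Hx].
  exact: dvdn_gcdl.
exact: dvdn_trans (dvdn_gcdr _ _) (IH Hx). Qed.

Lemma gcdl_gen X n : gen X n -> gcdl X %| n.
Proof. elim=> [|x m Hx _ IH]; first exact: dvdn0. by rewrite dvdn_add // gcdl_dvd. Qed.

Lemma gcdl_cat1 X T : gcdl (X ++ [:: T]) = gcdn (gcdl X) T.
Proof. elim: X => [|x X IH] /=; first by rewrite gcdn0 gcd0n.
by rewrite IH gcdnA. Qed.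

Lemma gcdl_map X d : gcdl (map (fun x => x * d) X) = gcdl X * d.
Proof. elim: X => [|x X IH] //=. by rewrite IH muln_gcdl. Qed.

Fixpoint AA (n : nat) : nat :=
  match n with 0 => 0 | 1 => 3 | (n'.+1 as m).+1 => 4 * AA m + 1 end.
Fixpoint BB (n : nat) : nat :=
  match n with 0 => 0 | 1 => 2 | (n'.+1 as m).+1 => 2 * BB m + 4 * AA m end.

Lemma ABform n : 3 * BB n + 9 * 2 ^ n = 5 * 4 ^ n + 4 /\ (1 <= n -> 6 * AA n + 2 = 5 * 4 ^ n).
Proof.
elim: n => [|n [IHB IHA]] //.
case: n IHB IHA => [|n] IHB IHA //.
have HA := IHA isT.
have EB : BB n.+2 = 2 * BB n.+1 + 4 * AA n.+1 by [].
have EA : AA n.+2 = 4 * AA n.+1 + 1 by [].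
rewrite EB EA; rewrite !expnS in IHB HA *; split; [lia | move=> _; lia].
Qed.

Lemma take_take' (T : Type) i j (s : seq T) : i <= j -> take i (take j s) = take i s.
Proof. by move=> Hij; rewrite -take_min (minn_idPl Hij). Qed.

Lemma main m : forall t, size t = m.+1 -> free_fuel m.+1 t -> gcdl t = 1 ->
  sorted ltn t -> 0 < nth 0 t 0 ->
  (forall k, 0 < k <= m -> ~ gen (take k t) (nth 0 t k)) ->
  (forall k, 1 <= k -> k <= m - 1 -> ek t k * nth 0 t k < nth 0 t k.+1) ->
  exists c, [/\ BB m <= c, (0 < m -> AA m <= nth 0 t m), (0 < m -> 2 <= dk t m)
             & forall n, gen t n -> n.+1 <> c].
Proof.
elim: m => [|m IH] t Hsz Hfree Hg Hsort Hpos Hmin Hpl.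
  by exists 0; split.
set X := take m.+1 t; set T := nth 0 t m.+1; set d := gcdl X.
have Et : t = X ++ [:: T].
  by rewrite cats1 /X /T -take_nth ?Hsz // take_oversize ?Hsz.
move: Hfree; rewrite /= Hsz /= => -[Hglue Hfree'].
have HszX : size X = m.+1 by rewrite size_take Hsz ltnS leqnn.
have Hdiv : forall x, x \in X -> d %| x by move=> x; exact: gcdl_dvd.
have HX0 : nth 0 X 0 = nth 0 t 0 by rewrite nth_take.
have dpos : 0 < d.
  have : d %| nth 0 t 0 by rewrite -HX0; apply: Hdiv; rewrite mem_nth ?HszX.
  rewrite lt0n; apply: contraTN => /eqP ->; rewrite dvd0n -lt0n //.
set s := map (fun x => x %/ d) X.
have EX : X = map (fun x => x * d) s.
  rewrite /s -map_comp map_id_in // => x Hx /=; exact: divnK (Hdiv x Hx).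
have Hszs : size s = m.+1 by rewrite size_map.
have HgT : gcdl [:: T] = T by rewrite /= gcdn0.
have Hcop : coprime d T by move: Hg; rewrite {1}Et gcdl_cat1 /coprime => ->.
have HminT : ~ gen X T by apply: Hmin; rewrite leqnn.
have Tpos : 0 < T.
  rewrite lt0n; apply/negP => /eqP HT0; apply: HminT; rewrite HT0; exact: gen0.
have Hlcm : lcmn d T = d * T.
  by have := muln_lcm_gcd d T; move: Hcop => /eqP ->; rewrite muln1.
move: Hglue => [_ [_ [HglX _]]]; move: HglX; rewrite HgT -/d Hlcm => HglX.
have {}HglX : gen X (d * T) := HglX.
have d2 : 2 <= d.
  case: (ltngtP d 1) => // [/ltac:(lia)|Hd1].
  by exfalso; apply: HminT; move: HglX; rewrite Hd1 mul1n.
have HTs : gen s T.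
  move: HglX; rewrite EX => /gen_scale_down [x Hx Hgx].
  by move: Hx; rewrite mulnC => /eqP; rewrite eqn_pmul2r // => /eqP ->.
have Hnth : forall i, i < m.+1 -> nth 0 t i = nth 0 s i * d.
  by move=> i Hj; rewrite -(nth_take 0 Hj) -/X EX (nth_map 0) // Hszs.
have Hdk : forall j, j <= m.+1 -> dk t j = dk s j * d.
  by move=> j Hj; rewrite /dk -(take_take' _ _ _ t Hj) -/X EX -map_take gcdl_map //.
have Hek : forall j, j <= m -> ek t j = ek s j.
  move=> j Hj; rewrite /ek !Hdk; [by rewrite divnMr | lia | lia].
have Hgs : gcdl s = 1.
  by apply/eqP; rewrite -(eqn_pmul2r dpos) mul1n -gcdl_map -EX.
have [c' [HB HA Hd Hgap]] : exists c, [/\ BB m <= c, (0 < m -> AA m <= nth 0 s m),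
     (0 < m -> 2 <= dk s m) & forall n, gen s n -> n.+1 <> c].
  apply: IH => //.
  - move: (take_sorted m.+1 Hsort); rewrite -/X EX.
    by rewrite (mono_sorted (fun x y => @ltn_pmul2r d x y dpos)).
  - by move: Hpos; rewrite Hnth // muln_gt0 => /andP [].
  - move=> k Hk Hgk; apply: (Hmin k); first by lia.
    move: (gen_scale_up _ d _ Hgk); rewrite map_take -EX take_take'; last by lia.
    by rewrite -Hnth //; lia.
  - move=> k Hk1 Hk2; have := Hpl k Hk1 ltac:(lia).
    rewrite Hek; last by lia.
    by rewrite !Hnth; [rewrite mulnA ltn_pmul2r | lia | lia].
have Hlt : forall i j, i < j <= m.+1 -> nth 0 t i < nth 0 t j.
  move=> i j /andP [Hij Hj]; apply: (sorted_ltn_nth ltn_trans 0 Hsort); rewrite ?inE ?Hsz //; lia.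
have Hbnd : BB m.+1 <= d * c' + (d - 1) * (T - 1) /\ AA m.+1 <= T.
  case Hm: m => [|m'].
    have Hs1 : nth 0 s 0 = 1.
      move: Hgs Hszs; rewrite Hm; case: (s) => [|a [|]] //= ; by rewrite gcdn0.
    have := Hlt 0 1; rewrite Hm Hnth ?Hs1 ?mul1n -/T; last by rewrite Hm.
    move=> /(_ isT) HdT.
    have ET : nth 0 t 1 = T by rewrite /T Hm.
    rewrite ET in HdT.
    have K : 1 * 2 <= (d - 1) * (T - 1) by apply: leq_mul; lia.
    split; [rewrite /=; lia | rewrite /=; lia].
  rewrite -Hm.
  have := Hpl m ltac:(lia) ltac:(lia); rewrite Hek // Hnth // -/T.
  have Hds : dk s m.+1 = 1 by rewrite /dk take_oversize ?Hszs.
  rewrite /ek Hds divn1 => HT.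
  have HA' := HA ltac:(lia); have Hd' := Hd ltac:(lia).
  have K1 : 2 * (AA m * d) <= dk s m * (nth 0 s m * d) by apply: leq_mul => //; apply: leq_mul.
  have K2 : 2 * AA m <= AA m * d by rewrite mulnC leq_mul2l d2 orbT.
  have K3 : 1 * (2 * (AA m * d)) <= (d - 1) * (T - 1) by apply: leq_mul; lia.
  have K4 : 2 * BB m <= d * c' by apply: leq_mul.
  have EB : BB m.+1 = 2 * BB m + 4 * AA m by rewrite Hm.
  have EA : AA m.+1 = 4 * AA m + 1 by rewrite Hm.
  rewrite EB EA; split; lia.
exists (d * c' + (d - 1) * (T - 1)); split.
- by case: Hbnd.
- by case: Hbnd.
- by move=> _; exact: d2.
- move=> n; rewrite Et => /gen_cat1 [a [y [Ha ->]]].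
  move: Ha; rewrite EX => /gen_scale_down [x -> Hx] Hc.
  have K : (d-1)*(T-1) + d + T = d*T + 1.
    clear -d2 Tpos; case: d d2 => // d _; case: T Tpos => // T _.
    rewrite !subn1 /= !mulSn !mulnS; lia.
  have E : T * y.+1 + d * x.+1 = d * (c' + T) by rewrite !mulnS mulnDr; lia.
  have : d %| T * y.+1.
    by rewrite -(dvdn_addr _ (dvdn_mulr x.+1 (dvdnn d))) addnC E dvdn_mulr.
  rewrite Gauss_dvdr // => /dvdnP [u Hu].
  have upos : 0 < u by case: u Hu.
  have E2 : T * u + x.+1 = c' + T.
    have E3 : d * (T * u + x.+1) = d * (c' + T).
      by rewrite -E Hu mulnDr mulnCA [d * u]mulnC.
    by apply/eqP; rewrite -(eqn_pmul2l dpos); apply/eqP.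
  apply: (Hgap (x + T * (u - 1))); first by apply: gen_add => //; exact: gen_mul.
  move: E2; case: u upos {Hu} => // u _; rewrite subn1 /= mulnS; lia.
Qed.
Import GRing.Theory Num.Theory.
Local Open Scope ring_scope.

Theorem proposition5p2 (r : seq nat) (F : nat) :
  minimal_gens r ->
  finite_complement r ->
  sorted ltn r ->
  (exists n, ~ gen r n) ->
  plane_curve_semigroup r ->
  frobenius r F ->
  let h := (size r).-1 in
  (5%:R / 3%:R) * 2%:R ^+ (2 * h) - 3%:R * 2%:R ^+ h + 4%:R / 3%:R
    <= ((F + 1)%N)%:R :> rat.
Proof.
move=> [Huniq Hmin] [N HN] Hsort _ [[_ Hfree] Hpl] [HF HFr]; cbv zeta; set h := (size r).-1.
have Hg : gcdl r = 1%N.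
  have H1 := gcdl_gen _ _ (HN N (leqnn _)).
  have H2 := gcdl_gen _ _ (HN N.+1 (leqnSn _)).
  by move: H2; rewrite -addn1 dvdn_addr // dvdn1 => /eqP.
have Hsz : size r = h.+1.
  rewrite /h; case: (r) Hg => //=.
have Hpos : (0 < nth 0 r 0)%N.
  rewrite lt0n; apply/negP => /eqP H0.
  have Hin : nth 0 r 0 \in r by rewrite mem_nth // Hsz.
  by apply: (Hmin _ Hin); rewrite H0; exact: gen0.
have Hm : forall k, (0 < k <= h)%N -> ~ gen (take k r) (nth 0 r k).
  move=> k /andP [Hk0 Hk] Hgen.
  have Hks : (k < size r)%N by rewrite Hsz ltnS.
  have Hin : nth 0 r k \in r by rewrite mem_nth.
  apply: (Hmin _ Hin); apply: (gen_sub _ _ _ _ Hgen) => y Hy.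
  rewrite (mem_rem_uniq _ Huniq) inE (mem_take Hy) andbT.
  apply/negP => /eqP Hyx; move: Huniq; rewrite -(cat_take_drop k r) cat_uniq.
  case/and3P => _ /hasP Hh _; apply: Hh; exists (nth 0 r k) => //.
    by rewrite (drop_nth 0 Hks) mem_head.
  by rewrite -Hyx.
have [c [HB _ _ Hgap]] := main h r Hsz ltac:(by rewrite -Hsz) Hg Hsort Hpos Hm
  ltac:(by move=> k Hk1 Hk2; apply: Hpl).
have HcF : (BB h <= F + 1)%N.
  apply: leq_trans HB _; case: c Hgap => // c Hgap.
  rewrite addn1 ltnS leqNgt; apply/negP => HlF.
  by apply: (Hgap c) => //; exact: HFr.
have [HAB _] := ABform h.
have HAB' : (3 * BB h + 9 * 2 ^ h = 5 * 2 ^ (2 * h) + 4)%N by rewrite expnM.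
have := congr1 (fun n => n%:R : rat) HAB'; rewrite !natrD !natrX => E.
have := HcF; rewrite -(ler_nat rat) natrD => HcF'.

lra.
Qed.
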